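(* Under the standing assumptions, for every $p^*\in X^*$: (i) $v(P_{p^*})\ge v(D^F_{p^*})$ if and only if $\Omega\cap B_{p^*}\subseteq\operatorname{epi}(f-g+\delta_A)^c\cap B_{p^*}$; (ii) $v(P_{p^*})\ge v(\bar D^F_{p^*})$ if and only if $K\cap B_{p^*}\subseteq\operatorname{epi}(f-g+\delta_A)^c\cap B_{p^*}$.
   Context: Let $X$ be a nontrivial separated locally convex space with topological dual $X^*$, endowed with the topology $\sigma(X,X^* )$; $\langle x,x^*\rangle$ is the value of $x^*\in X^*$ at $x\in X$. Put $W:=X^*\times X^*\times\mathbb{R}$, $\mathbb{R}_{++}:=]0,+\infty[$ and $Z:=X^*\times X^*\times\mathbb{R}_{++}$. For $y^*\in X^*$, $\alpha\in\mathbb{R}$, let $H^-_{y^*,\alpha}:=\{x\in X:\langle x,y^*\rangle<\alpha\}$. The coupling function $c:X\times W\to\overline{\mathbb{R}}$ is $c(x,(x^*,y^*,\alpha)):=\langle x,x^*\rangle$ if $\langle x,y^*\rangle<\alpha$ and $:=+\infty$ otherwise. For $h:X\to\overline{\mathbb{R}}$ its $c$-conjugate is $h^c:W\to\overline{\mathbb{R}}$, $h^c(w):=\sup_{x\in X}\{c(x,w)-h(x)\}$, with the convention $(+\infty)+(-\infty)=(-\infty)+(+\infty)=(+\infty)-(+\infty)=(-\infty)-(-\infty)=-\infty$ (so for proper $h$, $h^c(x^*,y^*,\alpha)=h^*(x^* )$ if $\operatorname{dom}h\subseteq H^-_{y^*,\alpha}$ and $+\infty$ otherwise). Epigraphs of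 functions on $W$ are subsets of $W\times\mathbb{R}$. $\delta_A$ is the indicator function of $A$. For $E\subseteq W\times\mathbb{R}$ and $e\in W\times\mathbb{R}$, $E-e:=\{z-e:z\in E\}$. Standing assumptions: $f,g:X\to\overline{\mathbb{R}}$ proper convex with $\operatorname{dom}f\subseteq\operatorname{dom}g$, $A\subseteq X$ nonempty, convention $(+\infty)-(+\infty)=+\infty$ in $f-g$. For $p^*\in X^*$: $(P_{p^*})$ is $\inf_{x\in A}\{f(x)-g(x)+\langle x,p^*\rangle\}$ with value $v(P_{p^*})$; with $\varphi_{p^*}(u^*,v^*,\gamma;x^*,y^*,\alpha):=g^c(u^*,v^*,\gamma)-f^c(u^*-x^*-p^*,-y^*,\alpha)-\delta_A^c(x^*,y^*,\alpha)$, the duals are $v(D^F_{p^*}):=\sup_{(x^*,y^*,\alpha)\in Z}\inf_{(u^*,v^*,\gamma)\in\operatorname{dom}g^c}\varphi_{p^*}$ and $v(\bar D^F_{p^*}):=\inf_{(u^*,v^*,\gamma)\in\operatorname{dom}g^c}\sup_{(x^*,y^*,\alpha)\in Z}\varphi_{p^*}$. Sets: $B_{p^*}:=\{-p^*\}\times\{0\}\times\mathbb{R}_{++}\times\mathbb{R}\subseteq W\times\mathbb{R}$; $\Omega:=\bigcup_{(x^*,y^*,\alpha)\in\operatorname{dom}\delta_A^c}\ \bigcap_{(u^*,v^*,\gamma)\in\operatorname{dom}g^c}\Big[\operatorname{epi}\big(f-c(\cdot,(-x^*,-y^*,\alpha))\big)^c-\big(u^*,0,0,g^c(u^*,v^*,\gamma)-\delta_A^c(x^*,y^*,\alpha)\big)\Big]$,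 $K:=\bigcap_{(u^*,v^*,\gamma)\in\operatorname{dom}g^c}\ \bigcup_{(x^*,y^*,\alpha)\in\operatorname{dom}\delta_A^c}\Big[\operatorname{epi}\big(f-c(\cdot,(-x^*,-y^*,\alpha))\big)^c-\big(u^*,0,0,g^c(u^*,v^*,\gamma)-\delta_A^c(x^*,y^*,\alpha)\big)\Big]$. *)

(* Defs.v *)
From HB Require Import structures.
From mathcomp Require Import all_boot all_order all_algebra.
From mathcomp Require Import all_classical reals constructive_ereal ereal.
Set Implicit Arguments. Unset Strict Implicit. Unset Printing Implicit Defensive.
Import Order.TTheory GRing.Theory Num.Theory.
Local Open Scope classical_set_scope.
Local Open Scope ring_scope.

Section Defs.
Context {R : realType} {X Xs : lmodType R} (pair : X -> Xs -> R).

(* (X, X^* ) is a separated dual pair; X carries sigma(X,X^* ), which is a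
   separated locally convex topology whose topological dual is exactly X^*. *)
Definition separated_dual_pair : Prop :=
  (forall x1 x2 xs, pair (x1 + x2) xs = pair x1 xs + pair x2 xs) /\
      (forall (a : R) x xs, pair (a *: x) xs = a * pair x xs) /\
      (forall x xs1 xs2, pair x (xs1 + xs2) = pair x xs1 + pair x xs2) /\
      (forall (a : R) x xs, pair x (a *: xs) = a * pair x xs) /\
      (forall x, (forall xs, pair x xs = 0) -> x = 0) /\
      (forall xs, (forall x, pair x xs = 0) -> xs = 0).

Definition W := (Xs * Xs * R)%type.

Local Open Scope ereal_scope.

Definition coupling (x : X) (w : W) : \bar R :=
  if (pair x w.1.2 < w.2)%R then (pair x w.1.1)%:E else +oo.

(* c-conjugate; mathcomp's [adde] has (+oo) + (-oo) = -oo, as required *)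
Definition cconj (h : X -> \bar R) (w : W) : \bar R :=
  ereal_sup [set coupling x w - h x | x in [set: X]].

(* difference of functions on X with the convention (+oo) - (+oo) = +oo *)
Definition dsub (a b : \bar R) : \bar R := dual_adde a (- b).

Definition indic (A : set X) (x : X) : \bar R := if `[< A x >] then 0 else +oo.

Definition edom (F : W -> \bar R) : set W := [set w | F w < +oo].

Definition epi (F : W -> \bar R) : set (W * R) := [set z | F z.1 <= z.2%:E].

Definition subWR (z e : W * R) : W * R :=
  ((z.1.1.1 - e.1.1.1, z.1.1.2 - e.1.1.2, z.1.2 - e.1.2), z.2 - e.2)%R.
Definition translate (E : set (W * R)) (e : W * R) : set (W * R) :=
  [set subWR z e | z in E].

Definition Bset (p : Xs) : set (W * R) :=
  [set z : W * R | z.1.1.1 = (- p)%R /\ z.1.1.2 = 0%R /\ (0 < z.1.2)%R].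

Definition Zset : set W := [set w : W | (0 < w.2)%R].

Definition proper_fun (f : X -> \bar R) : Prop :=
  (forall x, f x != -oo) /\ exists x, f x < +oo.

Definition convex_fun (f : X -> \bar R) : Prop :=
  forall x y (a b t : R), f x <= a%:E -> f y <= b%:E -> (0 <= t <= 1)%R ->
    f (t *: x + (1 - t) *: y)%R <= (t * a + (1 - t) * b)%R%:E.

Definition dom_fun (f : X -> \bar R) : set X := [set x | f x < +oo].

Variables (f g : X -> \bar R) (A : set X).

Definition fmc (w : W) : X -> \bar R :=
  fun x => dsub (f x) (coupling x (- w.1.1, - w.1.2, w.2)%R).

Definition OKpiece (u w : W) : set (W * R) :=
  translate (epi (cconj (fmc w)))
    (u.1.1, 0%R, 0%R, (fine (cconj g u) - fine (cconj (indic A) w))%R).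

Definition Omega : set (W * R) :=
  \bigcup_(w in edom (cconj (indic A))) \bigcap_(u in edom (cconj g)) OKpiece u w.

Definition Kset : set (W * R) :=
  \bigcap_(u in edom (cconj g)) \bigcup_(w in edom (cconj (indic A))) OKpiece u w.

Definition fgA : X -> \bar R := fun x => dsub (f x) (g x) + indic A x.

Definition phi (p : Xs) (u w : W) : \bar R :=
  cconj g u - cconj f (u.1.1 - w.1.1 - p, - w.1.2, w.2)%R - cconj (indic A) w.

Definition vP (p : Xs) : \bar R :=
  ereal_inf [set dsub (f x) (g x) + (pair x p)%:E | x in A].

Definition vD (p : Xs) : \bar R :=
  ereal_sup [set ereal_inf [set phi p u w | u in edom (cconj g)] | w in Zset].

Definition vDbar (p : Xs) : \bar R :=
  ereal_inf [set ereal_sup [set phi p u w | w in Zset] | u in edom (cconj g)].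

End Defs.

(* Main.v *)
Require Import Defs.
From HB Require Import structures.
From mathcomp Require Import all_boot all_order all_algebra.
From mathcomp Require Import all_classical reals constructive_ereal ereal.
From mathcomp Require Import ring lra.
Import Order.TTheory GRing.Theory Num.Theory.
Local Open Scope classical_set_scope.
Local Open Scope ereal_scope.

Section P.
Variables (R : realType) (X Xs : lmodType R) (pair : X -> Xs -> R).
Hypothesis Hpair : separated_dual_pair pair.

Lemma pairD x u v : pair x (u + v) = (pair x u + pair x v)%R.
Proof. by case: Hpair => _ [_ [H _]]. Qed.

Lemma pair0 x : pair x 0 = 0%R.
Proof. apply: (addrI (pair x 0)); by rewrite addr0 -pairD addr0. Qed.

Lemma pairN x v : pair x (- v) = (- pair x v)%R.
Proof. apply: (addrI (pair x v)); by rewrite subrr -pairD subrr pair0. Qed.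

Lemma pairB x u v : pair x (u - v) = (pair x u - pair x v)%R.
Proof. by rewrite pairD pairN. Qed.

Lemma coupling_pos x v (a : R) : (0 < a)%R -> coupling pair x (v, 0%R, a) = (pair x v)%:E.
Proof. by move=> ha; rewrite /coupling /= pair0 ha. Qed.

Lemma cconj_fmc (f : X -> \bar R) (w : (Xs * Xs * R)%type) v (a : R) : (0 < a)%R ->
  cconj pair (fmc pair f w) (v, 0%R, a) = cconj pair f (v - w.1.1, - w.1.2, w.2)%R.
Proof.
move=> ha; rewrite /cconj; congr ereal_sup; apply/seteqP; split => _ [x _ <-];
  exists x => //; rewrite coupling_pos // /fmc /coupling /dsub /=;
  case: (pair x (- w.1.2) < w.2)%R; case: (f x) => [r| |] //=;
  rewrite /dual_adde /= ?pairB ?pairN; congr (_%:E); ring.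
Qed.


Lemma cconj_gtNy (h : X -> \bar R) w : (exists x, h x < +oo) -> -oo < cconj pair h w.
Proof.
case=> x hx; apply: (lt_le_trans _ (ereal_sup_ubound (ex_intro2 _ _ x I erefl))).
rewrite /coupling; case: ifP => _; move: hx; case: (h x) => //= r _.
exact: ltNyr.
Qed.

Lemma cconj_anti (h : X -> \bar R) v y (a b : R) : (a <= b)%R ->
  cconj pair h (v, y, b) <= cconj pair h (v, y, a).
Proof.
move=> hab; apply: ge_ereal_sup => _ [x _ <-].
apply: le_trans (ereal_sup_ubound (ex_intro2 _ _ x I erefl)).
apply: leeD2r; rewrite /coupling /=.
case: ifP => hb; case: ifP => ha //; first exact: leey.
by rewrite (lt_le_trans ha hab) in hb.
Qed.

Lemma LemA (a b : \bar R) : (forall t : R, t%:E < a -> t%:E <= b) -> a <= b.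
Proof.
case: a => [a| |] H; last exact: leNye.
- case: b H => [b| |] H; last 2 first.
  + exact: leey.
  + by have := H (a - 1)%R; rewrite lte_fin leeNy_eq /=; move/(_ ltac:(lra)).
  rewrite lee_fin; case: (lerP a b) => // hba.
  have := H ((a + b) / 2)%R; rewrite !lee_fin lte_fin; clear H; move=> H; have := H ltac:(lra); clear H; move=> H; exfalso; lra.
- case: b H => [b| |] H //.
  + have := H (b + 1)%R (ltry _); rewrite lee_fin => h; clear H; exfalso; lra.
  + by have := H 0%R (ltry _); rewrite leeNy_eq.
Qed.

Lemma arith (F : \bar R) (r G D : R) :
  F <= (r + (G - D))%:E <-> (- r)%:E <= G%:E - F - D%:E.
Proof.
case: F => [F| |] /=.
- by rewrite !lee_fin; split => ?; lra.
- rewrite leye_eq leeNy_eq; split => //.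
- by split => _; [exact: leey | exact: leNye].
Qed.

Definition addWR (z e : (Xs * Xs * R * R)%type) : (Xs * Xs * R * R)%type :=
  ((z.1.1.1 + e.1.1.1, z.1.1.2 + e.1.1.2, z.1.2 + e.1.2), z.2 + e.2)%R.

Lemma translateP E e z : translate E e z <-> E (addWR z e).
Proof.
split.
- case=> z' hz <-; move: z' e hz => [[[a b] c] d] [[[a' b'] c'] d'] /=. rewrite /addWR /subWR /=.
  by rewrite !subrK.
- move=> hz; exists (addWR z e) => //; case: z e {hz} => [[[a b] c] d] [[[a' b'] c'] d'] /=. rewrite /addWR /subWR /=.
  by rewrite !addrK.
Qed.


Variables (f g : X -> \bar R) (A : set X).
Hypotheses (hf : proper_fun f) (hg : proper_fun g)
  (hfg : dom_fun f `<=` dom_fun g) (hA : A !=set0).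

Lemma fin_of (F : \bar R) : -oo < F -> F < +oo -> F = (fine F)%:E.
Proof. by move=> h1 h2; rewrite fineK // fin_numE (gt_eqF h1) (lt_eqF h2). Qed.

Lemma gc_gtNy u : -oo < cconj pair g u.
Proof. by apply: cconj_gtNy; case: hg. Qed.

Lemma fc_gtNy u : -oo < cconj pair f u.
Proof. by apply: cconj_gtNy; case: hf. Qed.

Lemma dc_gtNy u : -oo < cconj pair (indic A) u.
Proof.
apply: cconj_gtNy; case: hA => x Ax; exists x.
by rewrite /indic asboolT.
Qed.

Lemma phi_Ny p u w : cconj pair (indic A) w = +oo -> phi pair f g A p u w = -oo.
Proof. by move=> h; rewrite /phi h; exact: addeNy. Qed.

Lemma phi_mono p u (w : (Xs * Xs * R)%type) (b : R) : (w.2 <= b)%R ->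
  phi pair f g A p u w <= phi pair f g A p u (w.1, b).
Proof.
case: w => [[w1 w2] w3] /= hb; rewrite /phi /=.
apply: leeD; first (apply: leeD2l; rewrite leeN2; exact: cconj_anti).
by rewrite leeN2; exact: cconj_anti.
Qed.

Lemma edom_mono (w : (Xs * Xs * R)%type) (b : R) : (w.2 <= b)%R ->
  edom (cconj pair (indic A)) w -> edom (cconj pair (indic A)) (w.1, b).
Proof.
case: w => [[w1 w2] w3] /= hb; rewrite /edom /= => h.
apply: le_lt_trans h; exact: cconj_anti.
Qed.

Lemma edom_w0 : edom (cconj pair (indic A)) (0%R, 0%R, 1%R).
Proof.
rewrite /edom; apply: (@le_lt_trans _ _ 0); last exact: ltry.
apply: ge_ereal_sup => _ [x _ <-]; rewrite coupling_pos // pair0 /indic.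
by case: (`[< A x >]) => /=; [rewrite subee | exact: leNye].
Qed.

Lemma OKpieceB (p : Xs) (a r : R) u w : (0 < a)%R ->
  edom (cconj pair g) u -> edom (cconj pair (indic A)) w ->
  (OKpiece pair f g A u w (((- p)%R, 0%R, a), r) <-> (- r)%:E <= phi pair f g A p u w).
Proof.
move=> ha hu hw; rewrite /OKpiece translateP /epi /addWR /=.
rewrite /phi [cconj pair g u]fin_of ?gc_gtNy //.
rewrite [cconj pair (indic A) w]fin_of ?dc_gtNy //.
rewrite -arith !addr0 cconj_fmc //.
by rewrite (addrC (- p)%R) addrAC.
Qed.


Lemma dsub_neq x : dsub (f x) (g x) != -oo.
Proof.
have hfx := hf.1 x; have hgx := hg.1 x.
have hfg' : f x < +oo -> g x < +oo by apply: hfg.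
rewrite /dsub; move: hfx hgx hfg'; case: (f x) => [a| |]; case: (g x) => [b| |] //=.
by move=> _ _ /(_ (ltry _)).
Qed.

Lemma term_eq (p : Xs) x : A x ->
  (pair x (- p)%R)%:E - fgA f g A x = - (dsub (f x) (g x) + (pair x p)%:E).
Proof.
move=> Ax; rewrite /fgA /indic asboolT // adde0 pairN.
by case: (dsub _ _) => [d| |] //=; congr (_%:E); ring.
Qed.

Lemma epiB (p : Xs) (a : R) : (0 < a)%R ->
  cconj pair (fgA f g A) ((- p)%R, 0%R, a) = - vP pair f g A p.
Proof.
move=> ha; rewrite /vP /ereal_inf oppeK; apply/le_anti/andP; split.
- apply: ge_ereal_sup => _ [x _ <-]; rewrite coupling_pos //.
  have [Ax|nAx] := pselect (A x).
  + rewrite term_eq //; apply: ereal_sup_ubound.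
    by exists (dsub (f x) (g x) + (pair x p)%:E) => //; exists x.
  + rewrite /fgA /indic asboolF //.
    have := dsub_neq x; case: (dsub _ _) => [d| |] //= _; exact: leNye.
- apply: ge_ereal_sup => _ [_ [x Ax <-] <-].
  rewrite -term_eq //; apply: ereal_sup_ubound; exists x => //.
  by rewrite coupling_pos.
Qed.


Definition Pw (p : Xs) (s : R) := exists2 w, edom (cconj pair (indic A)) w &
  forall u, edom (cconj pair g) u -> s%:E <= phi pair f g A p u w.
Definition Qw (p : Xs) (s : R) := forall u, edom (cconj pair g) u ->
  exists2 w, edom (cconj pair (indic A)) w & s%:E <= phi pair f g A p u w.

Lemma OmegaB (p : Xs) (a r : R) : (0 < a)%R ->
  Omega pair f g A (((- p)%R, 0%R, a), r) <-> Pw p (- r).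
Proof.
move=> ha; split.
- case=> w hw H; exists w => // u hu; move: (H u hu); rewrite OKpieceB //.
- case=> w hw H; exists w => // u hu; apply/(OKpieceB p a r u w ha hu hw); exact: H.
Qed.

Lemma KB (p : Xs) (a r : R) : (0 < a)%R ->
  Kset pair f g A (((- p)%R, 0%R, a), r) <-> Qw p (- r).
Proof.
move=> ha; split.
- move=> H u hu; case: (H u hu) => w hw Hw; exists w => //; move: Hw; rewrite OKpieceB //.
- move=> H u hu; case: (H u hu) => w hw Hw; exists w => //; apply/(OKpieceB p a r u w ha hu hw); exact: Hw.
Qed.

Lemma inclP (S : set (W * R)%type) (P : Xs -> R -> Prop) p :
  (forall a r, (0 < a)%R -> S (((- p)%R, 0%R, a), r) <-> P p (- r)%R) ->
  (S `&` Bset p `<=` epi (cconj pair (fgA f g A)) `&` Bset p) <->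
  (forall s, P p s -> s%:E <= vP pair f g A p).
Proof.
move=> HS; split.
- move=> H s hs.
  have hz : (S `&` Bset p) (((- p)%R, 0%R, 1%R), (- s)%R).
    split; [by rewrite HS // opprK | by split=> //=].
  by case: (H _ hz); rewrite /epi /= epiB // EFinN leeN2.
- move=> H [[[z1 z2] z3] z4] [hO [/= h1 [h2 h3]]]; subst z1 z2.
  split; last by split.
  rewrite /epi /= epiB // leeNl -EFinN; apply: H; exact/(HS _ _ h3).
Qed.

Lemma mainI (p : Xs) : vD pair f g A p <= vP pair f g A p <->
  (forall s, Pw p s -> s%:E <= vP pair f g A p).
Proof.
split.
- move=> hv s [w hw Hw]; apply: le_trans hv.
  apply: (@le_trans _ _ (ereal_inf [set phi pair f g A p u (w.1, Order.max w.2 1%R) | u in edom (cconj pair g)])).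
  + apply: le_ereal_inf_tmp => _ [u hu <-].
    apply: (le_trans (Hw u hu)); apply: phi_mono; by rewrite le_max lexx.
  + apply: ereal_sup_ubound; exists (w.1, Order.max w.2 1%R) => //.
    by rewrite /Zset /= lt_max ltr01 orbT.
- move=> H; apply: ge_ereal_sup => _ [w hwZ <-]; apply: LemA => t ht.
  have [hw|hw] := ltP (cconj pair (indic A) w) +oo.
  + apply: H; exists w => // u hu; apply: ltW; apply: lt_le_trans ht _.
    by apply: ereal_inf_lbound; exists u.
  + apply: H; exists (0%R, 0%R, 1%R); first exact: edom_w0.
    move=> u hu; exfalso.
    have := lt_le_trans ht (ereal_inf_lbound (ex_intro2 _ _ u hu erefl)).
    rewrite phi_Ny; last by apply/eqP; rewrite -leye_eq.
    by rewrite ltNge leNye.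
Qed.

Lemma mainII (p : Xs) : vDbar pair f g A p <= vP pair f g A p <->
  (forall s, Qw p s -> s%:E <= vP pair f g A p).
Proof.
split.
- move=> hv s H; apply: le_trans hv.
  apply: le_ereal_inf_tmp => _ [u hu <-].
  have [w hw hs] := H u hu; apply: le_trans hs _.
  apply: (le_trans (phi_mono p u w (Order.max w.2 1%R) _)).
    by rewrite le_max lexx.
  apply: ereal_sup_ubound; exists (w.1, Order.max w.2 1%R) => //.
  by rewrite /Zset /= lt_max ltr01 orbT.
- move=> H; apply: LemA => t ht; apply: H => u hu.
  have := lt_le_trans ht (ereal_inf_lbound (ex_intro2 _ _ u hu erefl)).
  case/ereal_sup_gt => _ [w hwZ <-] htw; exists w; last exact: ltW.
  have [//|hw] := ltP (cconj pair (indic A) w) +oo.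
  move: htw; rewrite phi_Ny; last by apply/eqP; rewrite -leye_eq.
  by rewrite ltNge leNye.
Qed.

Lemma main (p : Xs) :
    (vD pair f g A p <= vP pair f g A p <->
       Omega pair f g A `&` Bset p `<=` epi (cconj pair (fgA f g A)) `&` Bset p) /\
    (vDbar pair f g A p <= vP pair f g A p <->
       Kset pair f g A `&` Bset p `<=` epi (cconj pair (fgA f g A)) `&` Bset p).
Proof.
split.
- rewrite mainI (@inclP (Omega pair f g A) Pw p) //; exact: OmegaB.
- rewrite mainII (@inclP (Kset pair f g A) Qw p) //; exact: KB.
Qed.

End P.

Theorem proposition6p2 (R : realType) (X Xs : lmodType R) (pair : X -> Xs -> R)
  (f g : X -> \bar R) (A : set X) :
  separated_dual_pair pair ->
  (exists x : X, x != 0%R) ->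
  proper_fun f -> convex_fun f ->
  proper_fun g -> convex_fun g ->
  dom_fun f `<=` dom_fun g ->
  A !=set0 ->
  forall p : Xs,
    (vD pair f g A p <= vP pair f g A p <->
       Omega pair f g A `&` Bset p `<=` epi (cconj pair (fgA f g A)) `&` Bset p) /\
    (vDbar pair f g A p <= vP pair f g A p <->
       Kset pair f g A `&` Bset p `<=` epi (cconj pair (fgA f g A)) `&` Bset p).
Proof.
move=> Hp _ hf _ hg _ hfg hA p; exact: main.
Qed.
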